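(* Let $G$ be the cycle with vertices $u,v,w$ and edges $uv,vw,wu$, and let $H$ have OD-pairs $(u,w),(u,v),(w,v)$. Take two classes: class 1 consists of $I_{(u,v)}$ with $\lambda(I_{(u,v)})=1.5$; class 2 consists of $I_{(u,w)}\cup I_{(w,v)}$ with $\lambda(I_{(u,w)})=\lambda(I_{(w,v)})=1$. Class 1 costs: $c_{(u,w)}(x)=x$, $c_{(w,v)}(x)=x+48$, $c_{(u,v)}(x)=24x+7$. Class 2 costs: $c_{(u,w)}(x)=22x$, $c_{(w,v)}(x)=22x$, $c_{(w,u)}(x)=x$, $c_{(u,v)}(x)=x+26$, $c_{(v,w)}(x)=x$ (costs on arcs not used by any route of a class are arbitrary nonnegative continuous strictly increasing). Let $\sigma$ have class 1 users on the route $u\to v$ and class 2 users on the routes $u\to w$ and $w\to v$ respectively; let $\hat\sigma$ have class 1 users on the route $u\to w\to v$, users of $I_{(u,w)}$ on $u\to v\to w$ and users of $I_{(w,v)}$ on $w\to u\to v$. Then $\sigma$ and $\hat\sigma$ are both equilibria, and they induce different flows (e.g. on arc $(u,v)$ the flows are $1.5$ and $2$). In particular multiple equilibrium flows can occur on a ring with only two classes of users.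
   Context: Model: the directed version of $G$ has the six arcs $(u,v),(v,u),(v,w),(w,v),(u,w),(w,u)$; routes of an OD-pair $(o,d)$ are the directed $(o,d)$-paths. Users form a bounded interval with Lebesgue measure $\lambda$; the flow on an arc is the measure of users whose route contains it; a user's cost for a route is the sum over its arcs of his (class-dependent) cost function evaluated at the arc flow; an equilibrium is a strategy profile in which every user's route has minimal cost among the routes of his OD-pair. *)

(* Defs.v *)
From Stdlib Require Import Reals List.
Import ListNotations.
Open Scope R_scope.

Inductive vertex := U | V | W.

(* Arcs of the directed version of G: ordered pairs of distinct vertices
   (G is the triangle, so these are exactly the six arcs). *)
Definition arc := (vertex * vertex)%type.
Definition is_arc (a : arc) : Prop := fst a <> snd a.

Fixpoint arcs_of (p : list vertex) : list arc :=
  match p with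
  | x :: ((y :: _) as t) => (x, y) :: arcs_of t
  | _ => nil
  end.

Definition is_path (o d : vertex) (p : list vertex) : Prop :=
  p <> nil /\ hd o p = o /\ last p o = d /\ NoDup p /\
  Forall is_arc (arcs_of p).

Inductive uclass := Class1 | Class2.

(* The users form a bounded interval split into the subintervals
   I_(u,v) (class 1), I_(u,w) and I_(w,v) (class 2).  Strategy profiles
   considered here are constant on each of these blocks, so we index
   users by their block. *)
Inductive block := B1uv | B2uw | B2wv.

Definition class_of (b : block) : uclass :=
  match b with B1uv => Class1 | _ => Class2 end.

Definition od_of (b : block) : vertex * vertex :=
  match b with B1uv => (U, V) | B2uw => (U, W) | B2wv => (W, V) end.

Definition mass (b : block) : R :=
  match b with B1uv => 3/2 | B2uw => 1 | B2wv => 1 end.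

Definition blocks : list block := [B1uv; B2uw; B2wv].

Definition profile := block -> list vertex.



Definition vertex_eq_dec (x y : vertex) : {x = y} + {x <> y}.
Proof. decide equality. Defined.

Definition arc_eq_dec (a b : arc) : {a = b} + {a <> b}.
Proof. decide equality; apply vertex_eq_dec. Defined.

Definition flow (s : profile) (a : arc) : R :=
  fold_right Rplus 0
    (map (fun b => mass b * (if in_dec arc_eq_dec a (arcs_of (s b)) then 1 else 0))
         blocks).

Definition costs := uclass -> arc -> R -> R.

Definition route_cost (c : costs) (k : uclass) (s : profile) (p : list vertex) : R :=
  fold_right Rplus 0 (map (fun a => c k a (flow s a)) (arcs_of p)).

Definition equilibrium (c : costs) (s : profile) : Prop :=
  forall b : block,
    is_path (fst (od_of b)) (snd (od_of b)) (s b) /\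
    forall p, is_path (fst (od_of b)) (snd (od_of b)) p ->
      route_cost c (class_of b) s (s b) <= route_cost c (class_of b) s p.

Definition sigma_prof : profile := fun b =>
  match b with B1uv => [U; V] | B2uw => [U; W] | B2wv => [W; V] end.

Definition sigma_hat : profile := fun b =>
  match b with B1uv => [U; W; V] | B2uw => [U; V; W] | B2wv => [W; U; V] end.

Definition admissible_cost (f : R -> R) : Prop :=
  (forall x, 0 <= x -> 0 <= f x) /\ continuity f /\
  (forall x y, x < y -> f x < f y).

(* Main.v *)
Require Import Defs.
From Stdlib Require Import Reals List Lra.
Import ListNotations.
Open Scope R_scope.

Lemma path_cases (o d : vertex) (p : list vertex) :
  is_path o d p -> o <> d ->
  p = [o; d] \/ exists x, p = [o; x; d] /\ x <> o /\ x <> d.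
Proof.
  intros [Hn [Hh [Hl [Hd _]]]] Hod.
  destruct p as [|a [|b [|e [|f t]]]]; simpl in *.
  - congruence.
  - subst; congruence.
  - subst; left; reflexivity.
  - subst. right. exists b.
    inversion Hd; subst. inversion H2; subst.
    split; [reflexivity|]. split; intro; subst; simpl in *; tauto.
  - exfalso. inversion Hd as [|? ? H1 H2]; subst. inversion H2 as [|? ? H3 H4]; subst.
    inversion H4 as [|? ? H5 H6]; subst.
    repeat match goal with v : vertex |- _ => destruct v end; simpl in *; tauto.
Qed.

Ltac solve_path :=
  unfold is_path; simpl; split; [discriminate|]; split; [reflexivity|];
  split; [reflexivity|]; split;
  [ repeat (constructor; [simpl; intuition discriminate|]); constructor
  | repeat (constructor; [unfold is_arc; simpl; discriminate|]); constructor ].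

Theorem mainTheorem16 (c : costs)
  (Hadm : forall k a, is_arc a -> admissible_cost (c k a))
  (H1uw : forall x, c Class1 (U, W) x = x)
  (H1wv : forall x, c Class1 (W, V) x = x + 48)
  (H1uv : forall x, c Class1 (U, V) x = 24 * x + 7)
  (H2uw : forall x, c Class2 (U, W) x = 22 * x)
  (H2wv : forall x, c Class2 (W, V) x = 22 * x)
  (H2wu : forall x, c Class2 (W, U) x = x)
  (H2uv : forall x, c Class2 (U, V) x = x + 26)
  (H2vw : forall x, c Class2 (V, W) x = x) :
  equilibrium c sigma_prof /\ equilibrium c sigma_hat /\
  flow sigma_prof (U, V) = 3/2 /\ flow sigma_hat (U, V) = 2 /\
  flow sigma_prof <> flow sigma_hat.
Proof.
  assert (FUV1 : flow sigma_prof (U, V) = 3/2) by (unfold flow; simpl; lra).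
  assert (FUV2 : flow sigma_hat (U, V) = 2) by (unfold flow; simpl; lra).
  split; [|split; [|split; [exact FUV1|split; [exact FUV2|]]]].
  - intros b; destruct b; simpl; (split; [solve_path|]);
    intros p Hp; (destruct (path_cases _ _ _ Hp ltac:(discriminate)) as [->|[x [-> [Hx1 Hx2]]]];
      [|destruct x; try congruence]);
    unfold route_cost, flow; simpl;
    rewrite ?H1uw, ?H1wv, ?H1uv, ?H2uw, ?H2wv, ?H2wu, ?H2uv, ?H2vw; lra.
  - intros b; destruct b; simpl; (split; [solve_path|]);
    intros p Hp; (destruct (path_cases _ _ _ Hp ltac:(discriminate)) as [->|[x [-> [Hx1 Hx2]]]];
      [|destruct x; try congruence]);
    unfold route_cost, flow; simpl;
    rewrite ?H1uw, ?H1wv, ?H1uv, ?H2uw, ?H2wv, ?H2wu, ?H2uv, ?H2vw; lra.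
  - intro E. rewrite E in FUV1. lra.
Qed.
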